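(* Fix integers $N\ge 1$, $t\ge 1$, $m\ge 1$. Let $A\in\{0,1\}^{N\times N}$ be an observed adjacency matrix and $X$ an $N\times d$ node feature matrix. Let $p(z)$ be a prior probability density on $\mathbb{R}^{t}$, and let $z\mapsto \tilde A_z\in[0,1]^{N\times N}$ be a deterministic decoder (with parameters $\theta$) mapping a latent graph embedding $z\in\mathbb{R}^t$ to a probabilistic adjacency matrix. Define $$p^0_\theta(A\mid \tilde A_z)=P(A\mid\tilde A_z)=\prod_{i=1}^N\prod_{j=1}^N (\tilde A_z)_{i,j}^{A_{i,j}}\bigl(1-(\tilde A_z)_{i,j}\bigr)^{1-A_{i,j}}.$$ For $u=1,\dots,m$ let $\phi_u$ be a descriptor function mapping (soft) $N\times N$ adjacency matrices to $\mathbb{R}^{l_u}$ with $l_u\ge 1$, let $F_u=\phi_u(A)\in\mathbb{R}^{l_u}$ and write $|F_u|=l_u$, and let $\sigma_u>0$. Let $\gamma\ge 0$. Define the micro-macro loss $$\mathcal{L}_\theta(A)=\mathcal{L}^0_\theta(A)+\gamma\,\mathcal{L}^1_{\theta,\sigma}(F_1,\dots,F_m),$$ where $$\mathcal{L}^0_\theta(A)=-\ln\int P(A\mid\tilde A_z)\,p(z)\,dz,\qquad \mathcal{L}^1_{\theta,\sigma}(F_1,\dots,F_m)=-\sum_{u=1}^m\frac{1}{|F_u|}\ln\int \mathcal{N}\bigl(F_u\mid \phi_u(\tilde A_z),\sigma_u^2 I\bigr)\,p(z)\,dz,$$ with $\mathcal{N}(\cdot\mid\mu,\sigma^2I)$ the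 Gaussian density with mean $\mu$ and covariance $\sigma^2 I$. Then for any approximate posterior density $q_\phi(z\mid A,X)=q(z\mid A,X,F_1,\dots,F_m)$ on $\mathbb{R}^t$ (with parameters $\phi$), $$\mathcal{L}_\theta(A)\le \mathbb{E}_{z\sim q_\phi(z\mid A,X)}\Bigl[-\ln p^0_\theta(A\mid\tilde A_z)-\gamma\sum_{u=1}^m\frac{1}{|F_u|}\ln\mathcal{N}\bigl(F_u\mid\phi_u(\tilde A_z),\sigma_u^2 I\bigr)\Bigr]+(1+\gamma m)\,\mathrm{KL}\bigl(q_\phi(z\mid A,X)\,\|\,p(z)\bigr).$$
   Context: This is a variational (ELBO-type) bound for a joint generative model of a graph: the adjacency matrix is generated edge-independently from a probabilistic adjacency matrix $\tilde A_z$ decoded from a latent graph embedding $z\sim p(z)$, and each graph statistic $F_u$ is modeled conditionally on $z$ as Gaussian with mean $\phi_u(\tilde A_z)$ and diagonal covariance $\sigma_u^2 I$. $\mathrm{KL}$ denotes Kullback–Leibler divergence. The hyperparameter $\gamma$ weights the graph-statistic (macro) loss relative to the edge (micro) loss. *)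

(* Defs.v *)
From HB Require Import structures.
From mathcomp Require Import all_boot all_order all_algebra.
From mathcomp Require Import all_classical all_reals all_analysis.
Set Implicit Arguments. Unset Strict Implicit. Unset Printing Implicit Defensive.
Import Order.TTheory GRing.Theory Num.Theory.
Local Open Scope ring_scope.

Section MicroMacro.
Variable R : realType.

Definition adj_real (N : nat) (A : 'M[bool]_N) : 'M[R]_N :=
  map_mx (fun b : bool => (b : nat)%:R) A.

Definition edge_lik (N : nat) (A : 'M[bool]_N) (At : 'M[R]_N) : R :=
  \prod_(i < N) \prod_(j < N)
     (At i j ^+ (A i j : nat) * (1 - At i j) ^+ (1 - (A i j : nat))%N).

Definition gauss_density (l : nat) (F mu : 'rV[R]_l) (s : R) : R :=
  (Num.sqrt (2 * pi * s ^+ 2)) ^- l *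
  expR (- (\sum_(k < l) (F 0 k - mu 0 k) ^+ 2) / (2 * s ^+ 2)).

Local Open Scope ereal_scope.

Definition kl_integrand (T : Type) (q p : T -> R) (z : T) : \bar R :=
  if q z == 0%R then 0
  else if p z == 0%R then +oo
  else ((q z) * ln (q z / p z))%:E.

Definition KL d (T : measurableType d) (mu : {measure set T -> \bar R})
  (q p : T -> R) : \bar R :=
  \int[mu]_z kl_integrand q p z.

End MicroMacro.

Arguments adj_real {R N}.
Arguments edge_lik {R N}.
Arguments gauss_density {R l}.
Arguments kl_integrand {R T}.
Arguments KL {R d T}.

(* Main.v *)
Require Import Defs.
From HB Require Import structures.
From mathcomp Require Import all_boot all_order all_algebra.
From mathcomp Require Import all_classical all_reals all_analysis.
From mathcomp Require Import measurable_realfun.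
From mathcomp Require Import ring lra.
Import Order.TTheory GRing.Theory Num.Theory.
Local Open Scope ring_scope.
Local Open Scope classical_set_scope.
Section AllHelpers.
Local Open Scope ereal_scope.

Lemma maxeN_le (R : realType) (y : \bar R) (g : R) :
  0 <= y + g%:E -> (0 <= g)%R -> maxe (- y) 0 <= g%:E.
Proof.
rewrite ge_max; case: y => [r| |] //= h1 h2; rewrite ?leNye ?lee_fin ?h2 ?andbT //.
rewrite -EFinD lee_fin in h1. lra.
Qed.

Lemma posneg_shift (R : realType) (y : \bar R) (g : R) : 0 <= y + g%:E -> (0 <= g)%R ->
  y + g%:E = maxe y 0 + (g%:E - maxe (- y) 0).
Proof.
case: y => [r| |] //= h1 h2.
  rewrite -EFinD lee_fin in h1.
  rewrite /maxe /=; case: ifP; case: ifP; rewrite ?lte_fin => a b;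
    rewrite /= -?EFinD -?EFinN -?EFinD; congr EFin; lra.
rewrite /maxe /=; case: ifP => //.
Qed.


Lemma ln_le_sub1 {R : realType} {x : R} : (0 < x)%R -> (ln x <= x - 1)%R.
Proof.
move=> x0; have := expR_ge1Dx (ln x); rewrite lnK ?posrE //; lra.
Qed.

Lemma klv_lb {R : realType} (qz pz : R) : (0 <= qz)%R -> (0 <= pz)%R ->
  ((qz - pz)%:E <= if qz == 0%R then 0 else if pz == 0%R then +oo
                   else (qz * ln (qz / pz))%:E).
Proof.
move=> q0 p0; have [->|qn0] := eqVneq qz 0%R; first by rewrite lee_fin; lra.
have [->|pn0] := eqVneq pz 0%R; first by rewrite leey.
have qp : (0 < qz)%R by rewrite lt_neqAle eq_sym qn0.
have pp : (0 < pz)%R by rewrite lt_neqAle eq_sym pn0.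
rewrite lee_fin.
have h := ln_le_sub1 (divr_gt0 pp qp).
have e : (ln (qz / pz) = - ln (pz / qz))%R.
  by rewrite -lnV ?posrE ?divr_gt0 // invf_div.
rewrite e.
have : (qz * ln (pz / qz) <= qz * (pz / qz - 1))%R by rewrite ler_wpM2l // ltW.
have -> : (qz * (pz / qz - 1) = pz - qz)%R by field; rewrite gt_eqF.
lra.
Qed.

Lemma klv_pw {R : realType} (qz pz fz b : R) : (0 <= qz)%R -> (0 <= pz)%R ->
  (0 <= fz)%R -> (0 < b)%R ->
  ((qz * (1 - ln b) - fz * pz / b)%:E <= (qz%:E * - lne fz%:E) +
     (if qz == 0%R then 0 else if pz == 0%R then +oo
                   else (qz * ln (qz / pz))%:E)).
Proof.
move=> q0 p0 f0 b0; have [->|qn0] := eqVneq qz 0%R.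
  rewrite mul0e add0e mul0r sub0r lee_fin oppr_le0.
  by rewrite divr_ge0 ?mulr_ge0 // ltW.
have qp : (0 < qz)%R by rewrite lt_neqAle eq_sym qn0.
have [fz0|fzp] := leP fz 0%R.
  rewrite le0_lneNy ?lee_fin // /= gt0_muley ?lte_fin //.
  case: ifP => _; first by rewrite addye // leey.
  by rewrite addye // leey.
rewrite lne_EFin // -EFinN -EFinM.
have [->|pn0] := eqVneq pz 0%R; first by rewrite addey // leey.
have pp : (0 < pz)%R by rewrite lt_neqAle eq_sym pn0.
rewrite -EFinD lee_fin.
set x := (fz * pz / (b * qz))%R.
have xp : (0 < x)%R by rewrite /x !divr_gt0 ?mulr_gt0.
have h := ln_le_sub1 xp.
have e1 : ln x = (ln fz + ln pz - ln b - ln qz)%R.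
  rewrite /x ln_div ?posrE ?mulr_gt0 // lnM ?posrE // lnM ?posrE //; ring.
have e2 : (qz * x = fz * pz / b)%R by rewrite /x; field; rewrite !gt_eqF.
have e3 : ln (qz / pz) = (ln qz - ln pz)%R by rewrite ln_div ?posrE.
have h2 : (qz * ln x <= qz * (x - 1))%R by rewrite ler_wpM2l // ltW.
rewrite e1 in h2; rewrite e3.
have h3 : (qz * (x - 1) = fz * pz / b - qz)%R by rewrite mulrBr e2 mulr1.
rewrite h3 in h2.
lra.
Qed.

Section Helpers.
Context {d : measure_display} {T : measurableType d} {R : realType} (mu : {measure set T -> \bar R}).

Lemma shiftE (f : T -> \bar R) (g : T -> R) :
  measurable_fun setT f -> mu.-integrable setT (EFin \o g) ->
  (forall x, (0 <= g x)%R) -> (forall x, 0 <= f x + (g x)%:E) ->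
  \int[mu]_x f x = \int[mu]_x (f x + (g x)%:E) - \int[mu]_x (g x)%:E.
Proof.
move=> mf ig g0 fg0.
have mg : measurable_fun setT (EFin \o g) := measurable_int _ ig.
have negle x : f^\- x <= (g x)%:E by rewrite funenegE; apply: maxeN_le.
have ineg : mu.-integrable setT f^\-.
  apply: le_integrable ig => //; first exact: measurable_funeneg.
  move=> x _; rewrite gee0_abs//= ?ger0_norm ?lee_fin//.
have Gfin : \int[mu]_x (g x)%:E \is a fin_num by apply: integrable_fin_num.
have Nfin : \int[mu]_x f^\- x \is a fin_num by apply: integrable_fin_num.
have -> : (fun x => f x + (g x)%:E) = (fun x => f^\+ x + ((EFin \o g) \- f^\-) x).
  by apply/funext => x /=; rewrite funeposE funenegE; apply: posneg_shift.
rewrite (ge0_integralD _ measurableT).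
- rewrite (integralB measurableT ig ineg) integralE.
  move: Gfin Nfin; set G := \int[mu]_x (g x)%:E; set Nn := \int[mu]_x f^\- x.
  set P := \int[mu]_x f^\+ x.
  move=> /fineK <- /fineK <-; case: P => [r| |] //=.
  by congr EFin; ring.
- by move=> x _; apply: funepos_ge0.
- exact: measurable_funepos.
- by move=> x _; rewrite /= subre_ge0 ?negle// -fin_num_abs.
- apply: emeasurable_funB => //; exact: measurable_funeneg.
Qed.

Lemma arith4 (X1 X2 G1 G2 : \bar R) : 0 <= X1 -> 0 <= X2 ->
  G1 \is a fin_num -> G2 \is a fin_num ->
  (X1 + X2) - (G1 + G2) = (X1 - G1) + (X2 - G2).
Proof.
move=> + + /fineK <- /fineK <-.
case: X1 => [a| |]; case: X2 => [b| |] //= _ _; by [congr EFin; ring|].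
Qed.

Lemma addI (f1 f2 : T -> \bar R) (g1 g2 : T -> R) :
  measurable_fun setT f1 -> measurable_fun setT f2 ->
  mu.-integrable setT (EFin \o g1) -> mu.-integrable setT (EFin \o g2) ->
  (forall x, (0 <= g1 x)%R) -> (forall x, (0 <= g2 x)%R) ->
  (forall x, 0 <= f1 x + (g1 x)%:E) -> (forall x, 0 <= f2 x + (g2 x)%:E) ->
  \int[mu]_x (f1 x + f2 x) = \int[mu]_x f1 x + \int[mu]_x f2 x.
Proof.
move=> mf1 mf2 ig1 ig2 g10 g20 h1 h2.
have ig : mu.-integrable setT (EFin \o (g1 \+ g2)%R).
  have -> : EFin \o (g1 \+ g2)%R = (EFin \o g1) \+ (EFin \o g2).
    by apply/funext => x /=; rewrite EFinD.
  exact: integrableD.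
rewrite (@shiftE _ (g1 \+ g2)%R) //; last 3 first.
- exact: emeasurable_funD.
- by move=> x; rewrite /= addr_ge0.
- by move=> x /=; rewrite EFinD addeACA adde_ge0.
rewrite (@shiftE _ _ mf1 ig1)// (@shiftE _ _ mf2 ig2)//.
under eq_integral do rewrite /= EFinD addeACA.
rewrite (ge0_integralD _ measurableT); last 4 first.
- by move=> x _; exact: h1.
- by apply: emeasurable_funD => //; exact: measurable_int ig1.
- by move=> x _; exact: h2.
- by apply: emeasurable_funD => //; exact: measurable_int ig2.
under [X in _ - X]eq_integral do rewrite EFinD.
rewrite (integralD_EFin measurableT ig1 ig2).
apply: arith4.
- by apply: integral_ge0 => x _; exact: h1.
- by apply: integral_ge0 => x _; exact: h2.
- exact: integrable_fin_num.
- exact: integrable_fin_num.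
Qed.

Lemma leI (f f' : T -> \bar R) (g : T -> R) :
  measurable_fun setT f -> measurable_fun setT f' ->
  mu.-integrable setT (EFin \o g) -> (forall x, (0 <= g x)%R) ->
  (forall x, 0 <= f x + (g x)%:E) -> (forall x, f x <= f' x) ->
  \int[mu]_x f x <= \int[mu]_x f' x.
Proof.
move=> mf mf' ig g0 h ff'.
have h' x : 0 <= f' x + (g x)%:E by apply: le_trans (h x) _; rewrite leeD2r.
rewrite (@shiftE _ _ mf ig)// (@shiftE _ _ mf' ig)//.
apply: leeD => //; apply: (ge0_le_integral _ measurableT).
- by move=> x _; exact: h.
- by apply: emeasurable_funD => //; exact: measurable_int ig.
- by apply: emeasurable_funD => //; exact: measurable_int ig.
- by move=> x _; rewrite leeD2r.
Qed.

Lemma scaleI (k : R) (f : T -> \bar R) (g : T -> R) : (0 <= k)%R ->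
  measurable_fun setT f -> 
  mu.-integrable setT (EFin \o g) -> (forall x, (0 <= g x)%R) ->
  (forall x, 0 <= f x + (g x)%:E) ->
  \int[mu]_x (k%:E * f x) = k%:E * \int[mu]_x f x.
Proof.
move=> k0 mf ig g0 h.
have ikg : mu.-integrable setT (EFin \o (fun x => k * g x)%R).
  have -> : EFin \o (fun x => k * g x)%R = (fun x => k%:E * (EFin \o g) x).
    by apply/funext => x /=; rewrite EFinM.
  exact: integrableZl.
have dist x : k%:E * f x + (k * g x)%:E = k%:E * (f x + (g x)%:E).
  by rewrite muleDr// ?EFinM// fin_num_adde_defl.
rewrite (@shiftE _ (fun x => k * g x)%R) //; last 3 first.
- exact: measurable_funeM.
- by move=> x; rewrite mulr_ge0.
- by move=> x; rewrite dist mule_ge0.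
under eq_integral do rewrite dist.
under [X in _ - X]eq_integral do rewrite EFinM.
rewrite (ge0_integralZl_EFin _ measurableT); last 3 first.
- by move=> x _; exact: h.
- by apply: emeasurable_funD => //; exact: measurable_int ig.
- by [].
rewrite (ge0_integralZl_EFin _ measurableT); last 3 first.
- by move=> x _; rewrite lee_fin.
- exact: measurable_int ig.
- by [].
rewrite (@shiftE _ _ mf ig g0 h) [RHS]muleBr.
- by [].
- by [].
- by apply: fin_num_adde_defl; rewrite fin_numN; exact: integrable_fin_num.
Qed.

End Helpers.

Section Dens.
Context {d : measure_display} {T : measurableType d} {R : realType} (mu : {measure set T -> \bar R}).
Variables (p q : T -> R).
Hypotheses (mp : measurable_fun setT p) (p0 : forall z, (0 <= p z)%R)
  (ip1 : \int[mu]_z (p z)%:E = 1)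
  (mq : measurable_fun setT q) (q0 : forall z, (0 <= q z)%R)
  (iq1 : \int[mu]_z (q z)%:E = 1).

Lemma dens_int (h : T -> R) : measurable_fun setT h -> (forall z, (0 <= h z)%R) ->
  \int[mu]_z (h z)%:E = 1 -> mu.-integrable setT (EFin \o h).
Proof.
move=> mh h0 h1; apply/integrableP; split; first exact/measurable_EFinP.
under eq_integral => x _ do rewrite /= ger0_norm //.
by rewrite h1 ltry.
Qed.

Lemma iq : mu.-integrable setT (EFin \o q). Proof. exact: dens_int. Qed.
Lemma ip : mu.-integrable setT (EFin \o p). Proof. exact: dens_int. Qed.

Lemma iZ (c : R) {h : T -> R} : mu.-integrable setT (EFin \o h) ->
  mu.-integrable setT (EFin \o (fun z => c * h z)%R).
Proof.
move=> ih; have -> : EFin \o (fun z => c * h z)%R = (fun z => c%:E * (EFin \o h) z).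
  by apply/funext => x /=; rewrite EFinM.
exact: integrableZl.
Qed.

Lemma mlne (f : T -> R) : measurable_fun setT f ->
  measurable_fun setT (fun z => lne (f z)%:E).
Proof.
move=> mf.
have -> : (fun z => lne (f z)%:E) =
   (fun z => if (f z <= 0)%R then -oo else (ln (f z))%:E) by [].
apply: measurable_fun_ifT.
- by apply: measurable_fun_ler => //; exact: measurable_cst.
- exact: measurable_cst.
- apply/measurable_EFinP; apply: measurableT_comp => //; exact: measurable_ln.
Qed.

Lemma mkl : measurable_fun setT (kl_integrand q p).
Proof.
have -> : kl_integrand q p = (fun z => if q z == 0%R then 0 else
   if p z == 0%R then +oo else (q z * (ln (q z) - ln (p z)))%:E).
  apply/funext => z; rewrite /kl_integrand.
  have [//|qn0] := eqVneq (q z) 0%R.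
  have [//|pn0] := eqVneq (p z) 0%R.
  have qp : (0 < q z)%R by rewrite lt_neqAle eq_sym qn0 q0.
  have pp : (0 < p z)%R by rewrite lt_neqAle eq_sym pn0 p0.
  by rewrite ln_div ?posrE.
apply: measurable_fun_ifT.
- by apply: measurable_fun_eqr => //; exact: measurable_cst.
- exact: measurable_cst.
apply: measurable_fun_ifT.
- by apply: measurable_fun_eqr => //; exact: measurable_cst.
- exact: measurable_cst.
apply/measurable_EFinP; apply: measurable_funM => //.
apply: measurable_funB; apply: measurableT_comp => //; exact: measurable_ln.
Qed.

Lemma kl_ge (z : T) : ((q z - p z)%:E <= kl_integrand q p z).
Proof. exact: klv_lb. Qed.

Lemma kl_nn (z : T) : 0 <= kl_integrand q p z + (p z)%:E.
Proof.
apply: le_trans (leeD (kl_ge z) (lexx (p z)%:E)).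
by rewrite -EFinD lee_fin subrK.
Qed.

Lemma KL_ge0 : 0 <= KL mu q p.
Proof.
have -> : 0 = \int[mu]_z (q z - p z)%:E.
  under eq_integral do rewrite EFinB.
  by rewrite (integralB_EFin measurableT iq ip) iq1 ip1 subee.
apply: (@leI _ _ _ mu _ _ p) => //.
- by apply/measurable_EFinP; exact: measurable_funB.
- exact: mkl.
- exact: ip.
- by move=> x; rewrite -EFinD lee_fin subrK.
- exact: kl_ge.
Qed.

Lemma fp_fin (f : T -> R) (M : R) : measurable_fun setT f -> (1 <= M)%R ->
  (forall z, 0 <= f z <= M)%R -> \int[mu]_z (f z * p z)%:E \is a fin_num.
Proof.
move=> mf M1 fM.
have M0 : (0 < M)%R by apply: lt_le_trans M1.
have ifp : mu.-integrable setT (EFin \o (fun z => f z * p z)%R).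
  apply: (le_integrable measurableT _ _ (iZ M ip)).
    exact/measurable_EFinP/measurable_funM.
  move=> z _; rewrite /= lee_fin !ger0_norm ?mulr_ge0 ?(ltW M0) //;
    have /andP[f0 fm] := fM z.
  - by rewrite ler_wpM2r.
  - by have /andP[] := fM z.
by move: (integrable_fin_num measurableT ifp).
Qed.

Lemma key (f : T -> R) (M : R) : measurable_fun setT f -> (1 <= M)%R ->
  (forall z, 0 <= f z <= M)%R ->
  - lne (\int[mu]_z (f z * p z)%:E) <=
  \int[mu]_z ((q z)%:E * - lne (f z)%:E) + KL mu q p.
Proof.
move=> mf M1 fM.
have M0 : (0 < M)%R by apply: lt_le_trans M1.
have mfp : measurable_fun setT (fun z => f z * p z)%R := measurable_funM mf mp.
have ifp : mu.-integrable setT (EFin \o (fun z => f z * p z)%R).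
  apply: (le_integrable measurableT _ _ (iZ M ip)).
    exact/measurable_EFinP.
  move=> z _; rewrite /= lee_fin !ger0_norm ?mulr_ge0 ?(ltW M0) //;
    have /andP[f0 fm] := fM z.
  - by rewrite ler_wpM2r.
  - by have /andP[] := fM z.
set a := \int[mu]_z (f z * p z)%:E.
have afin : a \is a fin_num := integrable_fin_num measurableT ifp.
have a0 : 0 <= a.
  apply: integral_ge0 => z _; rewrite lee_fin mulr_ge0 //.
  by have /andP[] := fM z.
set A1 := fun z => (q z)%:E * - lne (f z)%:E.
have mA1 : measurable_fun setT A1.
  apply: emeasurable_funM; first exact/measurable_EFinP.
  apply: measurableT_comp => //; exact: mlne.
have A1lb z : 0 <= A1 z + (ln M * q z)%:E.
  rewrite /A1; have /andP[f0 fm] := fM z.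
  have [fz0|fzp] := leP (f z) 0%R.
    rewrite le0_lneNy ?lee_fin //=.
    have [->|qn0] := eqVneq (q z) 0%R; first by rewrite mul0e mulr0 add0e.
    have qp : (0 < q z)%R by rewrite lt_neqAle eq_sym qn0 q0.
    by rewrite gt0_muley ?lte_fin // addye.
  rewrite lne_EFin // -EFinN -EFinM -EFinD lee_fin.
  have h : (0 <= q z * (ln M - ln (f z)))%R.
    by apply: mulr_ge0 => //; rewrite subr_ge0 ler_ln ?posrE.
  rewrite mulrBr in h; lra.
rewrite /KL -(@addI _ _ _ mu A1 (kl_integrand q p) (fun z => ln M * q z)%R p) //; last 5 first.
- exact: mkl.
- exact: iZ _ iq.
- exact: ip.
- by move=> z; rewrite mulr_ge0 ?ln_ge0.
- exact: kl_nn.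
have lbb (b : R) : (0 < b)%R ->
    ((1 - ln b) - fine a / b)%:E <= \int[mu]_z (A1 z + kl_integrand q p z).
  move=> b0.
  have e : \int[mu]_z (q z * (1 - ln b) - f z * p z / b)%:E = ((1 - ln b) - fine a / b)%:E.
    have -> : (fun z => (q z * (1 - ln b) - f z * p z / b)%:E) =
       (fun z => ((1 - ln b) * q z)%:E - (b^-1 * (f z * p z))%:E).
      by apply/funext => z; rewrite -EFinB; congr EFin; field; rewrite gt_eqF.
    rewrite (integralB_EFin measurableT (iZ _ iq) (iZ _ ifp)).
    under eq_integral do rewrite EFinM.
    rewrite (integralZl measurableT iq) iq1.
    under eq_integral do rewrite EFinM.
    rewrite (integralZl measurableT ifp) -/a -(fineK afin).
    by rewrite -!EFinM -EFinB /=; congr EFin; rewrite mulr1 mulrC.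
  rewrite -e.
  apply: (@leI _ _ _ mu _ _ (fun z => `|1 - ln b| * q z + b^-1 * (f z * p z))%R).
  - apply/measurable_EFinP; apply: measurable_funB.
      by apply: measurable_funM => //; exact: measurable_cst.
    apply: measurable_funM => //; exact: measurable_cst.
  - by apply: emeasurable_funD => //; exact: mkl.
  - have -> : EFin \o (fun z => `|1 - ln b| * q z + b^-1 * (f z * p z))%R =
       (EFin \o (fun z => `|1 - ln b| * q z)%R) \+ (EFin \o (fun z => b^-1 * (f z * p z))%R).
      by apply/funext => z /=; rewrite EFinD.
    by apply: integrableD => //; [exact: iZ _ iq | exact: iZ _ ifp].
  - move=> z; apply: addr_ge0; first by rewrite mulr_ge0.
    have /andP[fz0 _] := fM z; apply: mulr_ge0; [by rewrite invr_ge0 ltW | exact: mulr_ge0].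
  - move=> z; rewrite -EFinD lee_fin.
    have h1 : (- (q z * `|1 - ln b|) <= q z * (1 - ln b))%R.
      rewrite -mulrN ler_wpM2l //.
      by have := ler_norm (- (1 - ln b)); rewrite normrN; lra.
    have h2 : (f z * p z / b = b^-1 * (f z * p z))%R by rewrite mulrC.
    lra.
  - move=> z; rewrite /A1 /kl_integrand; apply: klv_pw => //.
    by have /andP[] := fM z.
have [apos|anp] := ltP 0%R (fine a).
  have := lbb _ apos; have -> : (1 - ln (fine a) - fine a / fine a = - ln (fine a))%R by rewrite divff ?gt_eqF //; ring.
  by rewrite -(fineK afin) lne_EFin // EFinN.
have a00 : fine a = 0%R by apply/le_anti; rewrite anp /= fine_ge0.
rewrite -(fineK afin) a00 le0_lneNy //=.
have hr (r : R) : r%:E <= \int[mu]_z (A1 z + kl_integrand q p z).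
  have := lbb _ (expR_gt0 (1 - r)); rewrite expRK a00 mul0r subr0.
  by have -> : (1 - (1 - r) = r)%R by ring.
move: hr; case: (\int[mu]_z (A1 z + kl_integrand q p z)) => [s| |] h //.
  by move: (h (s + 1)%R); rewrite lee_fin => h1; exfalso; lra.
by have := h 0%R.
Qed.


End Dens.

Section Model.
Context {d : measure_display} {T : measurableType d} {R : realType}.

Lemma edge_lik_bnd N (A : 'M[bool]_N) (At : 'M[R]_N) :
  (forall i j, 0 <= At i j <= 1)%R -> (0 <= edge_lik A At <= 1)%R.
Proof.
move=> hA.
have hf i j : (0 <= At i j ^+ (A i j : nat) * (1 - At i j) ^+ (1 - (A i j : nat))%N <= 1)%R.
  have /andP[h0 h1] := hA i j.
  have g0 : (0 <= 1 - At i j)%R by rewrite subr_ge0.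
  have g1 : (1 - At i j <= 1)%R by rewrite lerBlDr lerDl.
  apply/andP; split; first by rewrite mulr_ge0 // exprn_ge0.
  by rewrite mulr_ile1 ?exprn_ge0 ?exprn_ile1.
apply/andP; split.
  by apply: prodr_ge0 => i _; apply: prodr_ge0 => j _; have /andP[] := hf i j.
apply: prodr_ile1 => i _; apply/andP; split.
  by apply: prodr_ge0 => j _; have /andP[] := hf i j.
exact: prodr_ile1.
Qed.

Lemma edge_lik_meas N (A : 'M[bool]_N) (At : T -> 'M[R]_N) :
  (forall i j, measurable_fun setT (fun z => At z i j)) ->
  measurable_fun setT (fun z => edge_lik A (At z)).
Proof.
move=> mA; rewrite /edge_lik.
apply: measurable_prod => i _; apply: measurable_prod => j _.
apply: measurable_funM; first exact: measurable_funX.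
apply: measurable_funX; apply: measurable_funB => //; exact: measurable_cst.
Qed.

Definition gbound (l : nat) (s : R) : R := (Num.sqrt (2 * pi * s ^+ 2)) ^- l.

Lemma gauss_bnd l (F mu : 'rV[R]_l) s : (0 < s)%R ->
  (0 < gauss_density F mu s <= gbound l s)%R.
Proof.
move=> s0; rewrite /gauss_density /gbound.
have c0 : (0 < (Num.sqrt (2 * pi * s ^+ 2)) ^- l)%R.
  by rewrite invr_gt0 exprn_gt0 // sqrtr_gt0 !mulr_gt0 ?pi_gt0 ?exprn_gt0.
apply/andP; split; first by rewrite mulr_gt0 ?expR_gt0.
rewrite ger_pMr // expR_le1 mulNr oppr_le0 divr_ge0 //.
  by apply: sumr_ge0 => k _; exact: sqr_ge0.
by rewrite mulr_ge0 ?exprn_ge0 ?ltW.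
Qed.

Lemma gauss_meas l (F : 'rV[R]_l) (f : T -> 'rV[R]_l) s :
  (forall k, measurable_fun setT (fun z => f z 0%R k)) ->
  measurable_fun setT (fun z => gauss_density F (f z) s).
Proof.
move=> mf; rewrite /gauss_density.
apply: measurable_funM; first exact: measurable_cst.
apply: measurableT_comp; first exact: measurable_expR.
apply: measurable_funM; last exact: measurable_cst.
apply: measurable_funN; apply: measurable_sum => k.
apply: measurable_funX; apply: measurable_funB => //; exact: measurable_cst.
Qed.

End Model.

Section Helpers2.
Context {d : measure_display} {T : measurableType d} {R : realType} (mu : {measure set T -> \bar R}).

Lemma gtNy (f : T -> \bar R) (g : T -> R) :
  measurable_fun setT f -> mu.-integrable setT (EFin \o g) ->
  (forall x, (0 <= g x)%R) -> (forall x, 0 <= f x + (g x)%:E) ->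
  \int[mu]_x f x != -oo.
Proof.
move=> mf ig g0 h; rewrite (shiftE mu _ _ mf ig g0 h).
have : 0 <= \int[mu]_x (f x + (g x)%:E) by apply: integral_ge0 => x _; exact: h.
have := integrable_fin_num measurableT ig.
move=> /fineK <-; by case: (\int[mu]_x (f x + (g x)%:E)).
Qed.

Lemma sumI (I : Type) (s : seq I) (h gg : I -> T -> R) :
  (forall i, measurable_fun setT (h i)) ->
  (forall i, mu.-integrable setT (EFin \o gg i)) ->
  (forall i z, (0 <= gg i z)%R) -> (forall i z, (0 <= h i z + gg i z)%R) ->
  \int[mu]_z (\sum_(i <- s) h i z)%:E = \sum_(i <- s) \int[mu]_z (h i z)%:E.
Proof.
move=> mh ig g0 hg; elim: s => [|i s IH].
  rewrite big_nil; apply: integral0_eq => z _; by rewrite big_nil.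
under eq_integral do rewrite big_cons EFinD.
rewrite big_cons -IH.
have igs : mu.-integrable setT (EFin \o (fun z => \sum_(j <- s) gg j z)%R).
  have -> : EFin \o (fun z => \sum_(j <- s) gg j z)%R = (fun z => \sum_(j <- s) (gg j z)%:E).
    by apply/funext => z /=; rewrite sumEFin.
  by apply: (integrable_sum measurableT) => j _; exact: ig.
apply: (addI mu (fun z => (h i z)%:E) (fun z => (\sum_(j <- s) h j z)%:E)
   (gg i) (fun z => \sum_(j <- s) gg j z)%R).
- exact/measurable_EFinP.
- by apply/measurable_EFinP; apply: measurable_sum.
- exact: ig.
- exact: igs.
- exact: g0.
- by move=> z; apply: sumr_ge0.
- by move=> z; rewrite -EFinD lee_fin.
- move=> z; rewrite -EFinD lee_fin -big_split /=.
  by apply: sumr_ge0 => j _.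
Qed.

Lemma adde_def_ge (x y : \bar R) : x != -oo -> y != -oo -> x +? y.
Proof. by move: x y => [x| |] [y| |]. Qed.

End Helpers2.

Lemma mulNy_ge0 {R : realType} (r : R) (x : \bar R) : (0 <= r)%R -> x != -oo -> r%:E * x != -oo.
Proof.
move=> r0; case: x => [s| |] //= _.
have [->|rn] := eqVneq r 0%R; first by rewrite mul0e.
by rewrite gt0_muley // lte_fin lt_neqAle eq_sym rn.
Qed.

Lemma lneNy_fin {R : realType} (b : \bar R) : b \is a fin_num -> - lne b != -oo.
Proof. by move=> /fineK <- /=; case: ifP. Qed.

End AllHelpers.


Theorem proposition1 (R : realType)
  (d : measure_display) (T : measurableType d) (mu : {measure set T -> \bar R})
  (N m : nat) (A : 'M[bool]_N)
  (Atil : T -> 'M[R]_N)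
  (l : 'I_m -> nat) (phi : forall u : 'I_m, 'M[R]_N -> 'rV[R]_(l u))
  (sigma : 'I_m -> R) (gamma : R) (p q : T -> R) :
  (1 <= N)%N -> (1 <= m)%N ->
  (forall u, (1 <= l u)%N) ->
  (forall u, 0 < sigma u) ->
  0 <= gamma ->
  (* decoder: measurable, with values in [0,1]^(N x N) *)
  (forall z i j, 0 <= Atil z i j <= 1) ->
  (forall i j, measurable_fun setT (fun z => Atil z i j)) ->
  (forall u k, measurable_fun setT (fun z => phi u (Atil z) 0 k)) ->
  (* prior density p and approximate posterior density q *)
  measurable_fun setT p -> (forall z, 0 <= p z) ->
  (\int[mu]_z (p z)%:E = 1)%E ->
  measurable_fun setT q -> (forall z, 0 <= q z) ->
  (\int[mu]_z (q z)%:E = 1)%E ->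
  let F := fun u : 'I_m => phi u (adj_real A) in
  let L0 := (- lne (\int[mu]_z (edge_lik A (Atil z) * p z)%:E))%E in
  let L1 := (\sum_(u < m) ((l u)%:R^-1)%:E *
               - lne (\int[mu]_z
                   (gauss_density (phi u (adj_real A)) (phi u (Atil z)) (sigma u) * p z)%:E))%E in
  (L0 + gamma%:E * L1 <=
     \int[mu]_z ((q z)%:E *
        (- lne (edge_lik A (Atil z))%:E
         - gamma%:E * \sum_(u < m) ((l u)%:R^-1)%:E *
             lne (gauss_density (phi u (adj_real A)) (phi u (Atil z)) (sigma u))%:E))
     + (1 + gamma * m%:R)%:E * KL mu q p)%E.
Proof.
move=> N1 m1 l1 sig0 gam0 At01 mAt mphi mp p0 ip1 mq q0 iq1; cbv zeta beta.
pose c (u : 'I_m) : R := (l u)%:R^-1.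
have c0 u : 0 <= c u by rewrite invr_ge0.
have c1 u : c u <= 1.
  by rewrite invf_le1 ?ltr0n ?ler1n ?l1 // (leq_trans _ (l1 u)).
pose k u := gamma * c u.
have k0 u : 0 <= k u by rewrite mulr_ge0.
pose gg u z := gauss_density (phi u (adj_real A)) (phi u (Atil z)) (sigma u).
pose Mu u := Num.max (gbound (l u) (sigma u)) 1.
have Mu1 u : 1 <= Mu u by rewrite le_max lexx orbT.
have mg u : measurable_fun setT (gg u).
  exact: (gauss_meas _ (phi u (adj_real A)) (fun z => phi u (Atil z)) (sigma u) (mphi u)).
have gb u z : 0 < gg u z <= Mu u.
  have /andP[h1 h2] := gauss_bnd _ (phi u (adj_real A)) (phi u (Atil z)) _ (sig0 u).
  by rewrite h1 /= le_max h2.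
have gb' u z : 0 <= gg u z <= Mu u by have /andP[h1 h2] := gb u z; rewrite ltW.
have mf0 := edge_lik_meas _ A Atil mAt.
have f0b z := edge_lik_bnd _ A (Atil z) (At01 z).
have H0 := key mu p q mp p0 ip1 mq q0 iq1 (fun z => edge_lik A (Atil z)) 1 mf0 (lexx 1) f0b.
have Hu u := key mu p q mp p0 ip1 mq q0 iq1 (gg u) (Mu u) (mg u) (Mu1 u) (gb' u).
have KL0 := KL_ge0 mu p q mp p0 ip1 mq q0 iq1.
have iqq := iq mu q mq q0 iq1.
pose Y u := (\int[mu]_z (q z * - ln (gg u z))%:E)%E.
have lbu u z : 0 <= q z * - ln (gg u z) + ln (Mu u) * q z.
  have /andP[h1 h2] := gb u z.
  have h : 0 <= q z * (ln (Mu u) - ln (gg u z)).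
    by apply: mulr_ge0 => //; rewrite subr_ge0 ler_ln ?posrE // (lt_le_trans h1 h2).
  rewrite mulrBr in h; lra.
have mY u : measurable_fun setT (fun z => (q z * - ln (gg u z))%:E).
  apply/measurable_EFinP; apply: measurable_funM => //.
  apply: measurable_funN; apply: measurableT_comp => //; exact: measurable_ln.
have HuY u : (- lne (\int[mu]_z (gg u z * p z)%:E) <= Y u + KL mu q p)%E.
  have e : (\int[mu]_z ((q z)%:E * - lne (gg u z)%:E) = Y u)%E.
    apply: eq_integral => z _.
    have /andP[h1 _] := gb u z.
    by rewrite lne_EFin // -EFinN -EFinM.
  by rewrite -e; exact: Hu.
have YNy u : (Y u != -oo)%E.
  apply: (gtNy mu _ (fun z => ln (Mu u) * q z)) => //.
  - exact: iZ.
  - by move=> z; rewrite mulr_ge0 ?ln_ge0.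
  - by move=> z; rewrite -EFinD lee_fin.
pose X0 := (\int[mu]_z ((q z)%:E * - lne (edge_lik A (Atil z))%:E))%E.
pose KB := \sum_(u < m) k u * ln (Mu u).
have KB0 : 0 <= KB by apply: sumr_ge0 => u _; rewrite mulr_ge0 ?ln_ge0.
have eqI : (\int[mu]_z ((q z)%:E * (- lne (edge_lik A (Atil z))%:E -
        gamma%:E * (\sum_(u < m) ((c u)%:E * lne (gg u z)%:E)%E)%R)) =
        X0 + \sum_(u < m) (k u)%:E * Y u)%E.
  pose A1 z := ((q z)%:E * - lne (edge_lik A (Atil z))%:E)%E.
  pose B z := \sum_(u < m) k u * (q z * - ln (gg u z)).
  have pw z : ((q z)%:E * (- lne (edge_lik A (Atil z))%:E -
        gamma%:E * (\sum_(u < m) ((c u)%:E * lne (gg u z)%:E)%E)%R) = A1 z + (B z)%:E)%E.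
    have e1 : (\sum_(u < m) ((c u)%:E * lne (gg u z)%:E)%E)%R = (\sum_(u < m) c u * ln (gg u z))%:E.
      rewrite -sumEFin; apply: eq_bigr => u _.
      by have /andP[h1 _] := gb u z; rewrite lne_EFin // -EFinM.
    rewrite e1 -EFinM muleDr ?fin_num_adde_defl //.
    congr (_ + _)%E; rewrite -EFinN -EFinM; congr EFin.
    rewrite mulrN !mulr_sumr -sumrN; apply: eq_bigr => u _; rewrite /k; ring.
  under eq_integral do rewrite pw.
  have mA1 : measurable_fun setT A1.
    apply: emeasurable_funM; first exact/measurable_EFinP.
    apply: measurableT_comp => //; exact: mlne.
  have -> : (\int[mu]_z (A1 z + (B z)%:E) = \int[mu]_z A1 z + \int[mu]_z (B z)%:E)%E.
    apply: (addI mu A1 (fun z => (B z)%:E) (fun z => 0 * q z) (fun z => KB * q z)).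
    - exact: mA1.
    - apply/measurable_EFinP; apply: measurable_sum => u.
      apply: measurable_funM; first exact: measurable_cst.
      by apply/measurable_EFinP; exact: mY u.
    - exact: iZ.
    - exact: iZ.
    - by move=> z; rewrite mul0r.
    - by move=> z; rewrite mulr_ge0.
    - move=> z; rewrite mul0r adde0 /A1 mule_ge0 ?lee_fin //.
      have /andP[h1 h2] := f0b z.
      by rewrite leeNr oppe0 lne_le0 lee_fin.
    - move=> z; rewrite -EFinD lee_fin /B /KB mulr_suml -big_split /=.
      apply: sumr_ge0 => u _.
      have := lbu u z; have := k0 u; nra.
  congr (_ + _)%E.
  have -> : (\int[mu]_z (B z)%:E = \sum_(u < m) \int[mu]_z (k u * (q z * - ln (gg u z)))%:E)%E.
    apply: (sumI mu _ _ (fun u z => k u * (q z * - ln (gg u z))) (fun u z => k u * (ln (Mu u) * q z))).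
    - move=> u; apply: measurable_funM; first exact: measurable_cst.
      by apply/measurable_EFinP; exact: mY u.
    - by move=> u; apply: iZ; apply: iZ.
    - by move=> u z; rewrite mulr_ge0 ?mulr_ge0 ?ln_ge0.
    - by move=> u z; rewrite -mulrDr mulr_ge0.
  apply: eq_bigr => u _.
  under eq_integral do rewrite EFinM.
  apply: (scaleI mu (k u) _ (fun z => ln (Mu u) * q z)).
  - exact: k0.
  - exact: mY.
  - exact: iZ.
  - by move=> z; rewrite mulr_ge0 ?ln_ge0.
  - by move=> z; rewrite -EFinD lee_fin.
rewrite eqI.
set KLv := KL mu q p.
pose be u := (- lne (\int[mu]_z (gg u z * p z)%:E))%E.
have beNy u : (be u != -oo)%E.
  apply: lneNy_fin; exact: (fp_fin mu p mp p0 ip1 (gg u) (Mu u) (mg u) (Mu1 u) (gb' u)).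
have KLNy : (KLv != -oo)%E by rewrite gt_eqF // (lt_le_trans _ KL0) ?ltNy0.
have eL : (gamma%:E * (\sum_(u < m) ((c u)%:E * be u)%E)%R = \sum_(u < m) (k u)%:E * be u)%E.
  rewrite fin_num_sume_distrr //.
    by apply: eq_bigr => u _; rewrite muleA -EFinM.
  by move=> i j _ _; apply: adde_def_ge; apply: mulNy_ge0.
have S1 : (\sum_(u < m) (k u)%:E * be u <=
           \sum_(u < m) (k u)%:E * Y u + (gamma * m%:R)%:E * KLv)%E.
  apply: (@le_trans _ _ (\sum_(u < m) (k u)%:E * (Y u + KLv))%E).
    apply: lee_sum => u _; apply: lee_wpmul2l; [by rewrite lee_fin | exact: HuY].
  have e u : ((k u)%:E * (Y u + KLv) = (k u)%:E * Y u + (k u)%:E * KLv)%E.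
    by rewrite muleDr //; exact: adde_def_ge.
  rewrite (eq_bigr _ (fun u _ => e u)) big_split /=.
  apply: leeD => //.
  rewrite -ge0_sume_distrl; last by move=> u _; rewrite lee_fin.
  rewrite sumEFin; apply: lee_wpmul2r => //; rewrite lee_fin.
  rewrite /k -mulr_sumr ler_wpM2l //.
  apply: le_trans (ler_sum _ (fun u _ => c1 u)) _.
  by rewrite sumr_const card_ord.
apply: (@le_trans _ _ ((X0 + KLv) + (\sum_(u < m) (k u)%:E * Y u + (gamma * m%:R)%:E * KLv))%E).
  apply: leeD; first exact: H0.
  rewrite -eL in S1; exact: S1.
rewrite addeACA; apply: leeD => //.
by rewrite EFinD ge0_muleDl ?mul1e ?lee_fin ?mulr_ge0.
Qed.
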